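(* Let $I,J$ be positive integers, let $a_1,\ldots,a_J\in[0,\infty)^I$ be nonzero vectors, and consider the statistical model in which, for a parameter $\theta=(\theta_1,\ldots,\theta_I)\in(0,\infty)^I$, the observed counts $n_1,\ldots,n_J$ are independent with $n_j\sim\mathrm{Poisson}(\theta\cdot a_j)$, with joint probability mass function $$f_\theta(n_1,\ldots,n_J)=\prod_{j=1}^J\frac{(\theta\cdot a_j)^{n_j}e^{-\theta\cdot a_j}}{n_j!}.$$ Let $\mathcal{C}=\{C_1,\ldots,C_K\}$ be the maximal collapsing of $s_1,\ldots,s_J$ and let $T(n_1,\ldots,n_J)=(n_{C_1},\ldots,n_{C_K})$ with $n_{C_k}=\sum_{s_j\in C_k}n_j$. Then $T$ is a minimal sufficient statistic for $\theta$; that is, for any two count vectors $x,y\in\mathbb{Z}_{\ge0}^J$, the ratio $f_\theta(x)/f_\theta(y)$ does not depend on $\theta$ if and only if $T(x)=T(y)$.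
   Context: Read type $s_j$ has sampling rate vector $a_j=(a_{1,j},\ldots,a_{I,j})$ and $\theta\cdot a_j=\sum_i\theta_i a_{i,j}$. A collapsing of $s_1,\ldots,s_J$ is a partition $\{C_1,\ldots,C_K\}$ of $\{s_1,\ldots,s_J\}$ into nonempty disjoint categories such that whenever $s_{j_1},s_{j_2}$ lie in the same category, $a_{j_1}=c\,a_{j_2}$ for some real $c>0$; it is maximal if moreover, for reads $s_{j_1}\in C_{k_1}$, $s_{j_2}\in C_{k_2}$ with $k_1\ne k_2$, there is no real $c>0$ with $a_{j_1}=c\,a_{j_2}$. (Equivalently, the maximal collapsing groups reads exactly according to equality of the normalized vectors $a_j/\|a_j\|$.) *)

(* Defs.v *)
From HB Require Import structures.
From mathcomp Require Import all_boot all_order all_algebra.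
From mathcomp Require Import reals.
From mathcomp Require Import sequences exp.
Set Implicit Arguments. Unset Strict Implicit. Unset Printing Implicit Defensive.
Import Order.TTheory GRing.Theory Num.Theory.
Local Open Scope ring_scope.

Definition dotp (R : realType) (I : nat) (th v : 'I_I -> R) : R :=
  \sum_(i < I) th i * v i.

Definition pmf (R : realType) (I J : nat) (a : 'I_J -> 'I_I -> R)
    (th : 'I_I -> R) (n : 'I_J -> nat) : R :=
  \prod_(j < J)
    ((dotp th (a j)) ^+ n j * expR (- dotp th (a j)) / ((n j)`!)%:R).

Definition pos_multiple (R : realType) (I : nat) (u v : 'I_I -> R) : Prop :=
  exists c : R, 0 < c /\ u = (fun i => c * v i).

Definition collapsing (R : realType) (I J : nat) (a : 'I_J -> 'I_I -> R)
    (P : {set {set 'I_J}}) : Prop :=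
  partition P [set: 'I_J] /\
  (forall B, B \in P -> forall j1 j2, j1 \in B -> j2 \in B ->
     pos_multiple (a j1) (a j2)).

Definition maximal_collapsing (R : realType) (I J : nat)
    (a : 'I_J -> 'I_I -> R) (P : {set {set 'I_J}}) : Prop :=
  collapsing a P /\
  (forall B1 B2, B1 \in P -> B2 \in P -> B1 != B2 ->
     forall j1 j2, j1 \in B1 -> j2 \in B2 -> ~ pos_multiple (a j1) (a j2)).

Definition collapsed_count (J : nat) (n : 'I_J -> nat) (B : {set 'I_J}) : nat :=
  \sum_(j in B) n j.

(* Main.v *)
Require Import Defs.
From HB Require Import structures.
From mathcomp Require Import all_boot all_order all_algebra.
From mathcomp Require Import reals.
From mathcomp Require Import sequences exp.
From mathcomp Require Import ring lra.
From Stdlib Require Import FunctionalExtensionality.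
Import Order.TTheory GRing.Theory Num.Theory.
Local Open Scope ring_scope.
Set Implicit Arguments. Unset Strict Implicit. Unset Printing Implicit Defensive.


Lemma sum_pos (R : realType) (I : nat) (F : 'I_I -> R) :
  (forall i, 0 <= F i) -> (exists i, F i != 0) -> 0 < \sum_i F i.
Proof.
move=> H0 [i0 Hi0]; rewrite lt_neqAle sumr_ge0 // andbT eq_sym.
apply/negP => /eqP Hs.
have := @psumr_eq0P R _ xpredT F (fun i _ => H0 i) Hs i0 isT.
by move=> Hz; move: Hi0; rewrite Hz eqxx.
Qed.

Definition Ssum (R : realType) (I : nat) (v : 'I_I -> R) := \sum_i v i.

Lemma prop_coef (R : realType) (I : nat) (u v : 'I_I -> R) :
  pos_multiple u v -> 0 < Ssum v -> u = (fun i => (Ssum u / Ssum v) * v i).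
Proof.
move=> [c [_ ->]] Hv; have Hv0 : Ssum v != 0 by rewrite gt_eqF.
have -> : Ssum (fun i => c * v i) = c * Ssum v by rewrite /Ssum mulr_sumr.
by rewrite mulfK.
Qed.

Lemma dotp_scale (R : realType) (I : nat) (th v : 'I_I -> R) c :
  dotp th (fun i => c * v i) = c * dotp th v.
Proof. by rewrite /dotp mulr_sumr; apply: eq_bigr => i _; rewrite mulrCA. Qed.

Lemma prod_prop (T : comRingType) (J : nat) (B : {set 'I_J}) (f c : 'I_J -> T)
   (g : T) (n : 'I_J -> nat) :
  (forall j, j \in B -> f j = c j * g) ->
  \prod_(j in B) f j ^+ n j = (\prod_(j in B) c j ^+ n j) * g ^+ (\sum_(j in B) n j).
Proof.
move=> H; rewrite -prodrXr -big_split /=; apply: eq_bigr => j Hj.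
by rewrite H // exprMn.
Qed.

Lemma pmfE (R : realType) (I J : nat) (a : 'I_J -> 'I_I -> R) th n :
  pmf a th n = (\prod_j dotp th (a j) ^+ n j) * (\prod_j expR (- dotp th (a j)))
     * \prod_j ((n j)`!%:R)^-1.
Proof. by rewrite /pmf -!big_split. Qed.

Lemma key (R : realType) (I J : nat) (a : 'I_J -> 'I_I -> R) th th' x y :
  (forall j, dotp th (a j) != 0) -> (forall j, dotp th' (a j) != 0) ->
  (pmf a th x / pmf a th y = pmf a th' x / pmf a th' y) <->
  ((\prod_j dotp th (a j) ^+ x j) * (\prod_j dotp th' (a j) ^+ y j) =
   (\prod_j dotp th' (a j) ^+ x j) * (\prod_j dotp th (a j) ^+ y j)).
Proof.
move=> H1 H2.
have F0 : forall n : 'I_J -> nat, \prod_j ((n j)`!%:R)^-1 != 0 :> R.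
  by move=> n; apply/prodf_neq0 => j _; rewrite invr_eq0 pnatr_eq0 -lt0n fact_gt0.
have E0 : forall t : 'I_I -> R, \prod_j expR (- dotp t (a j)) != 0.
  by move=> t; apply/prodf_neq0 => j _; rewrite gt_eqF // expR_gt0.
have P0 : forall t (n : 'I_J -> nat), (forall j, dotp t (a j) != 0) ->
   \prod_j dotp t (a j) ^+ n j != 0.
  by move=> t n Ht; apply/prodf_neq0 => j _; rewrite expf_neq0.
rewrite !pmfE.
set A := \prod_j dotp th (a j) ^+ x j.
set B := \prod_j dotp th (a j) ^+ y j.
set A' := \prod_j dotp th' (a j) ^+ x j.
set B' := \prod_j dotp th' (a j) ^+ y j.
set E := \prod_j expR (- dotp th (a j)).
set E' := \prod_j expR (- dotp th' (a j)).
set Fx := \prod_j ((x j)`!%:R)^-1.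
set Fy := \prod_j ((y j)`!%:R)^-1.
have HB : B != 0 by apply: P0.
have HB' : B' != 0 by apply: P0.
have HE : E != 0 by apply: E0.
have HE' : E' != 0 by apply: E0.
have HFx : Fx != 0 by apply: F0.
have HFy : Fy != 0 by apply: F0.
have K0 : E * E' * Fx * Fy != 0 by rewrite !mulf_neq0.
split=> [/eqP|/eqP].
- rewrite eqr_div ?mulf_neq0 //.
  have -> : A * E * Fx * (B' * E' * Fy) = (A * B') * (E * E' * Fx * Fy) by ring.
  have -> : A' * E' * Fx * (B * E * Fy) = (A' * B) * (E * E' * Fx * Fy) by ring.
  by rewrite (inj_eq (mulIf K0)) => /eqP.
- move=> H; apply/eqP; rewrite eqr_div ?mulf_neq0 //.
  have -> : A * E * Fx * (B' * E' * Fy) = (A * B') * (E * E' * Fx * Fy) by ring.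
  have -> : A' * E' * Fx * (B * E * Fy) = (A' * B) * (E * E' * Fx * Fy) by ring.
  by rewrite (eqP H).
Qed.



Lemma block_prod (R : realType) (I J : nat) (a : 'I_J -> 'I_I -> R) th
   (B : {set 'I_J}) j0 (n : 'I_J -> nat) :
  j0 \in B -> 0 < Ssum (a j0) ->
  (forall j, j \in B -> pos_multiple (a j) (a j0)) ->
  \prod_(j in B) dotp th (a j) ^+ n j =
  (\prod_(j in B) (Ssum (a j) / Ssum (a j0)) ^+ n j) *
     dotp th (a j0) ^+ collapsed_count n B.
Proof.
move=> Hj0 HS Hm; apply: prod_prop => j Hj.
by rewrite {1}(prop_coef (Hm j Hj) HS) dotp_scale.
Qed.

Lemma reverse_dir (R : realType) (I J : nat) (a : 'I_J -> 'I_I -> R)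
    (ha_nneg : forall j i, 0 <= a j i)
    (ha_nz : forall j, exists i, a j i != 0)
    (P : {set {set 'I_J}}) (hP : collapsing a P) x y th th' :
  (forall B, B \in P -> collapsed_count x B = collapsed_count y B) ->
  (\prod_j dotp th (a j) ^+ x j) * (\prod_j dotp th' (a j) ^+ y j) =
   (\prod_j dotp th' (a j) ^+ x j) * (\prod_j dotp th (a j) ^+ y j).
Proof.
move: hP => [/and3P [/eqP Hcov Htriv H0] Hm] Hc.
have split_prod : forall t (n : 'I_J -> nat), \prod_j dotp t (a j) ^+ n j =
   \prod_(B in P) \prod_(j in B) dotp t (a j) ^+ n j.
  move=> t n; rewrite -big_trivIset // Hcov.
  by apply: eq_bigl => j; rewrite inE.
rewrite !split_prod -!big_split /=; apply: eq_bigr => B HB.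
case: (set_0Vmem B) => [HB0|[j0 Hj0]].
  by move: H0; rewrite -HB0 HB.
have HS : 0 < Ssum (a j0) by apply: sum_pos.
rewrite !(block_prod _ _ Hj0 HS (fun j Hj => Hm B HB j j0 Hj Hj0)) (Hc B HB).
ring.
Qed.



Lemma many_roots (R : realType) (p : {poly R}) :
  p != 0 -> exists2 z, z \in [seq (n.+1)%:R | n <- iota 0 (size p)] & ~~ root p z.
Proof.
move=> hp; apply/allPn/negP => Hall.
have Hu : uniq ([seq (n.+1)%:R | n <- iota 0 (size p)] : seq R).
  rewrite map_inj_uniq ?iota_uniq //.
  by move=> m n /eqP; rewrite eqr_nat => /eqP [].
have := max_poly_roots hp Hall Hu.
by rewrite size_map size_iota ltnn.
Qed.

Lemma poly_zero (R : realType) (p : {poly R}) :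
  (forall n : nat, p.[(n.+1)%:R] = 0) -> p = 0.
Proof.
move=> H; apply/eqP; apply/negPn/negP => hp.
have [z /mapP [n _ ->]] := many_roots hp.
by rewrite /root H eqxx.
Qed.

Lemma exists_nonroot (R : realType) (p : {poly R}) :
  p != 0 -> exists n : nat, p.[n%:R] != 0.
Proof.
by move=> hp; have [z /mapP [n _ ->]] := many_roots hp; exists n.+1.
Qed.

Definition Wp (R : realType) (I : nat) (w : 'I_I -> R) : {poly R} :=
  \sum_(i < I) (w i)%:P * 'X^i.

Lemma Wp_horner (R : realType) (I : nat) (w : 'I_I -> R) z :
  (Wp w).[z] = \sum_(i < I) w i * z ^+ i.
Proof.
rewrite /Wp horner_sum; apply: eq_bigr => i _.
by rewrite hornerCM hornerXn.
Qed.

Lemma Wp_neq0 (R : realType) (I : nat) (w : 'I_I -> R) i0 :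
  w i0 != 0 -> Wp w != 0.
Proof.
move=> H; apply/negP => /eqP H0.
have : (Wp w)`_i0 = w i0.
  rewrite /Wp coef_sum (bigD1 i0) //= coefCM coefXn eqxx mulr1 big1 ?addr0 //.
  move=> i Hi; rewrite coefCM coefXn.
  by case: eqP => [/val_inj E|]; [move: Hi; rewrite E eqxx | rewrite mulr0].
by rewrite H0 coef0 => E; move: H; rewrite -E eqxx.
Qed.

Lemma cancel_eval_le (R : realType) (p A1 A2 : {poly R}) (k1 k2 : nat) r :
  p != 0 -> p.[r] = 0 -> A1.[r] != 0 -> (k1 <= k2)%N ->
  A1 * p ^+ k1 = A2 * p ^+ k2 -> k1 = k2.
Proof.
move=> hp hr h1 Hle; rewrite -(subnKC Hle) exprD [p ^+ k1 * _]mulrC mulrA.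
move=> E0; have E := mulIf (expf_neq0 k1 hp) E0.
move: h1; rewrite E hornerM horner_exp hr expr0n.
have [->|Hd] := eqVneq (k2 - k1)%N 0%N; first by rewrite addn0.
by rewrite mulr0 eqxx.
Qed.

Lemma cancel_eval (R : realType) (p A1 A2 : {poly R}) (k1 k2 : nat) r :
  p != 0 -> p.[r] = 0 -> A1.[r] != 0 -> A2.[r] != 0 ->
  A1 * p ^+ k1 = A2 * p ^+ k2 -> k1 = k2.
Proof.
move=> hp hr h1 h2 E; case: (leqP k1 k2) => H.
  exact: (cancel_eval_le hp hr h1 H E).
have := cancel_eval_le hp hr h2 (ltnW H) (esym E). by move=> ->.
Qed.

Lemma sum_lin (R : realType) (I : nat) (u v : 'I_I -> R) c1 c2 (z : R) :
  \sum_(i < I) (c1 * u i - c2 * v i) * z ^+ i =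
  c1 * dotp (fun i : 'I_I => z ^+ i) u - c2 * dotp (fun i : 'I_I => z ^+ i) v.
Proof.
rewrite /dotp !mulr_sumr -sumrB; apply: eq_bigr => i _; ring.
Qed.

Definition Gp (R : realType) (I J : nat) (a : 'I_J -> 'I_I -> R) (q : 'I_I -> R)
  (j : 'I_J) : {poly R} := 'X * (Ssum (a j))%:P + (dotp q (a j))%:P.

Lemma Gp_horner (R : realType) (I J : nat) (a : 'I_J -> 'I_I -> R) q j t :
  (Gp a q j).[t] = dotp (fun i => t + q i) (a j).
Proof.
rewrite /Gp !hornerE /dotp /Ssum mulr_sumr -big_split; apply: eq_bigr => i _.
by rewrite /= mulrDl.
Qed.

Lemma Gp_scale (R : realType) (I J : nat) (a : 'I_J -> 'I_I -> R) q j j0 c :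
  a j = (fun i => c * a j0 i) -> Gp a q j = c%:P * Gp a q j0.
Proof.
move=> H; rewrite /Gp H dotp_scale.
have -> : Ssum (fun i => c * a j0 i) = c * Ssum (a j0) by rewrite /Ssum mulr_sumr.
rewrite !polyCM; ring.
Qed.



Lemma dot_pos (R : realType) (I J : nat) (a : 'I_J -> 'I_I -> R)
    (ha_nneg : forall j i, 0 <= a j i)
    (ha_nz : forall j, exists i, a j i != 0) th j :
  (forall i, 0 < th i) -> 0 < dotp th (a j).
Proof.
move=> Hth; apply: sum_pos => [i|]; first by rewrite mulr_ge0 // ltW.
have [i Hi] := ha_nz j; exists i; by rewrite mulf_neq0 // gt_eqF.
Qed.

Lemma forward_dir (R : realType) (I J : nat) (a : 'I_J -> 'I_I -> R)
    (ha_nneg : forall j i, 0 <= a j i)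
    (ha_nz : forall j, exists i, a j i != 0)
    (P : {set {set 'I_J}}) (hP : maximal_collapsing a P) x y :
  (forall th th', (forall i, 0 < th i) -> (forall i, 0 < th' i) ->
   (\prod_j dotp th (a j) ^+ x j) * (\prod_j dotp th' (a j) ^+ y j) =
   (\prod_j dotp th' (a j) ^+ x j) * (\prod_j dotp th (a j) ^+ y j)) ->
  forall B, B \in P -> collapsed_count x B = collapsed_count y B.
Proof.
move=> Hc.
move: hP => [[/and3P [/eqP Hcov Htriv H0] Hm] Hmax] B0 HB0.
case: (set_0Vmem B0) => [E|[j0 Hj0]]; first by move: H0; rewrite -E HB0.
have HS : forall j, 0 < Ssum (a j) by move=> j; apply: sum_pos.
have HS0 := HS j0.
have HS0' : Ssum (a j0) != 0 by rewrite gt_eqF.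
pose w j := fun i => Ssum (a j0) * a j i - Ssum (a j) * a j0 i.
pose Q := \prod_(j | j \notin B0) Wp (w j).
have HQ : Q != 0.
  apply/prodf_neq0 => j Hj.
  have [i0 Hi0] : exists i, w j i != 0.
    case: (boolP [exists i, w j i != 0]) => [/existsP //|].
    rewrite negb_exists => /forallP Hall; exfalso.
    have Hprop : a j = (fun i => (Ssum (a j) / Ssum (a j0)) * a j0 i).
      apply: functional_extensionality => i.
      have := Hall i; rewrite negbK /w subr_eq0 => /eqP E.
      rewrite -[a j i](mulKf HS0') E; ring.
    have /bigcupP [B HB HjB] : j \in cover P by rewrite Hcov inE.
    have HBne : B != B0 by apply/eqP => E; move: Hj; rewrite -E HjB.
    apply: (Hmax B B0 HB HB0 HBne j j0 HjB Hj0).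
    exists (Ssum (a j) / Ssum (a j0)); split => //; by rewrite divr_gt0.
  exact: (Wp_neq0 Hi0).
have [s Hs] := exists_nonroot HQ.
set z : R := s%:R in Hs.
have Hz0 : 0 <= z by rewrite ler0n.
pose q := fun i : 'I_I => z ^+ i.
pose G := Gp a q.
pose r := - dotp q (a j0) / Ssum (a j0).
have HGr0 : (G j0).[r] = 0.
  by rewrite /G /Gp !hornerE /r divfK // addNr.
have HGr : forall j, j \notin B0 -> (G j).[r] != 0.
  move=> j Hj.
  have HW : (Wp (w j)).[z] != 0.
    by move: Hs; rewrite /Q horner_prod => /prodf_neq0 H; exact: H j Hj.
  have -> : (G j).[r] = (Wp (w j)).[z] / Ssum (a j0).
    rewrite Wp_horner /w sum_lin /G /Gp !hornerE /r -/q.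
    by field.
  by rewrite mulf_neq0 // invr_eq0.
have Hthpos : forall n : nat, forall i, 0 < (n.+1)%:R + q i.
  move=> n i; have h1 : 0 < (n.+1)%:R :> R by rewrite ltr0Sn.
  have h2 : 0 <= q i by rewrite /q exprn_ge0.
  lra.
have HG0 : G j0 != 0.
  apply/negP => /eqP E; have := Gp_horner a q j0 1%:R.
  rewrite -/G E horner0 => H.
  have := dot_pos ha_nneg ha_nz j0 (Hthpos 0%N).
  by rewrite -H ltxx.
pose one := fun _ : 'I_I => 1 : R.
have Hone : forall i, 0 < one i by move=> i; rewrite /one ltr01.
pose PG (n : 'I_J -> nat) := \prod_j G j ^+ n j.
have PGh : forall n t, (PG n).[t] = \prod_j dotp (fun i => t + q i) (a j) ^+ n j.
  by move=> n t; rewrite /PG horner_prod; apply: eq_bigr => j _;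
     rewrite horner_exp Gp_horner.
pose Ux := \prod_j dotp one (a j) ^+ x j.
pose Uy := \prod_j dotp one (a j) ^+ y j.
have HD : Uy%:P * PG x = Ux%:P * PG y.
  apply/eqP; rewrite -subr_eq0; apply/eqP; apply: poly_zero => n.
  rewrite hornerD hornerN !hornerCM !PGh mulrC.
  by rewrite (Hc _ _ (Hthpos n) Hone) subrr.
pose c j := (Ssum (a j) / Ssum (a j0))%:P.
have Hsplit : forall n, PG n =
    ((\prod_(j in B0) c j ^+ n j) * G j0 ^+ collapsed_count n B0) *
    \prod_(j | j \notin B0) G j ^+ n j.
  move=> n; rewrite /PG (bigID (mem B0)) /=; congr (_ * _).
  apply: prod_prop => j Hj; apply: Gp_scale.
  exact: prop_coef (Hm B0 HB0 j j0 Hj Hj0) HS0.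
move: HD; rewrite !Hsplit.
set Cx := \prod_(j in B0) c j ^+ x j.
set Cy := \prod_(j in B0) c j ^+ y j.
set Hx := \prod_(j | j \notin B0) G j ^+ x j.
set Hy := \prod_(j | j \notin B0) G j ^+ y j.
set X := collapsed_count x B0.
set Y := collapsed_count y B0.
move=> HD.
have E2 : (Uy%:P * Cx * Hx) * G j0 ^+ X = (Ux%:P * Cy * Hy) * G j0 ^+ Y.
  have -> : (Uy%:P * Cx * Hx) * G j0 ^+ X = Uy%:P * (Cx * G j0 ^+ X * Hx) by ring.
  by rewrite HD; ring.
have HU : forall n : 'I_J -> nat, \prod_j dotp one (a j) ^+ n j != 0.
  move=> n; apply/prodf_neq0 => j _; rewrite expf_neq0 // gt_eqF //.
  exact: dot_pos.
have HC : forall n : 'I_J -> nat, (\prod_(j in B0) c j ^+ n j).[r] != 0.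
  move=> n; rewrite horner_prod; apply/prodf_neq0 => j _.
  by rewrite horner_exp hornerC expf_neq0 // mulf_neq0 // ?invr_eq0 gt_eqF.
have HH : forall n : 'I_J -> nat, (\prod_(j | j \notin B0) G j ^+ n j).[r] != 0.
  move=> n; rewrite horner_prod; apply/prodf_neq0 => j Hj.
  by rewrite horner_exp expf_neq0 // HGr.
apply: (cancel_eval HG0 HGr0 _ _ E2).
- by rewrite !hornerM hornerC !mulf_neq0 // ?HC ?HH ?HU.
- by rewrite !hornerM hornerC !mulf_neq0 // ?HC ?HH ?HU.
Qed.


Theorem theorem1 (R : realType) (I J : nat) (hI : (0 < I)%N) (hJ : (0 < J)%N)
    (a : 'I_J -> 'I_I -> R)
    (ha_nneg : forall j i, 0 <= a j i)
    (ha_nz : forall j, exists i, a j i != 0)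
    (P : {set {set 'I_J}}) (hP : maximal_collapsing a P) :
  forall x y : 'I_J -> nat,
    (forall th th' : 'I_I -> R, (forall i, 0 < th i) -> (forall i, 0 < th' i) ->
        pmf a th x / pmf a th y = pmf a th' x / pmf a th' y)
    <-> (forall B, B \in P -> collapsed_count x B = collapsed_count y B).
Proof.
move=> x y; split.
- move=> Hc; apply: (forward_dir ha_nneg ha_nz hP) => th th' H1 H2.
  have N1 : forall j, dotp th (a j) != 0.
    by move=> j; rewrite gt_eqF // (dot_pos ha_nneg ha_nz).
  have N2 : forall j, dotp th' (a j) != 0.
    by move=> j; rewrite gt_eqF // (dot_pos ha_nneg ha_nz).
  have K := @key R I J a th th' x y N1 N2.
  by move: (Hc th th' H1 H2) => /K.
- move=> Hc th th' H1 H2.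
  have N1 : forall j, dotp th (a j) != 0.
    by move=> j; rewrite gt_eqF // (dot_pos ha_nneg ha_nz).
  have N2 : forall j, dotp th' (a j) != 0.
    by move=> j; rewrite gt_eqF // (dot_pos ha_nneg ha_nz).
  have K := @key R I J a th th' x y N1 N2.
  apply/K.
  exact: (reverse_dir ha_nneg ha_nz hP.1 th th' Hc).
Qed.
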